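(* Let $A,B,C$ be finite sets, let $\varphi(x,y)$ be a condensation FO formula over $A$, and let $f\colon A^{\mathrm{ord}+}\to B$ and $g\colon B^{\mathrm{ord}}\to C$ be FO-definable maps. Then the map $A^{\mathrm{ord}}\to C$ sending $u$ to $g(w_u)$, where $w_u\in B^{\mathrm{ord}}$ is the word with domain $\mathrm{dom}(\hat\varphi(u))$ whose letter at position $i$ is $f(\hat\varphi(u)_i)$, is FO-definable.
   Context: Countable ordinal words: for a set $\Sigma$, a countable ordinal word over $\Sigma$ is a map $w\colon\alpha\to\Sigma$ with $\alpha$ a countable ordinal (its domain $\mathrm{dom}(w)$); $\Sigma^{\mathrm{ord}}$ is the set of all of them, $\Sigma^{\mathrm{ord}+}$ the nonempty ones. First-order logic: over a finite alphabet $\Sigma$, FO formulas are built from atoms $x<y$ and $a(x)$ ($a\in\Sigma$) by Boolean connectives and quantification over positions, interpreted on countable ordinal words. A language is FO-definable if it is the set of words satisfying some FO sentence. For $L\subseteq\Sigma^{\mathrm{ord}}$ and a finite set $X$, a map $f\colon L\to X$ is FO-definable if every preimage $f^{-1}(x)$, $x\in X$, is an FO-definable language. Condensations: a condensation of a countable ordinal $\alpha$ is an equivalence relation on $\alpha$ with convex classes; the quotient is again a countable ordinal. A condensation formula is an FO formula $\varphi(x,y)$ such that for every word $w\in\Sigma^{\mathrm{ord}}$ the relation $\{(\iota,\kappa): w,[x\mapsto\iota,y\mapsto\kappa]\models\varphi\}$ is a condensation of $\mathrm{dom}(w)$. It induces $\hat\varphi\colon\Sigma^{\mathrm{ord}}\to(\Sigma^{\mathrm{ord}+})^{\mathrm{ord}}$: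 $\hat\varphi(u)$ has domain the ordered set of classes, and its letter at class $I$ is the subword $(u_\iota)_{\iota\in I}$. *)

(* Defs.v *)
From mathcomp Require Import all_boot.
Set Implicit Arguments.
Unset Strict Implicit.
Unset Printing Implicit Defensive.

(* It is a countable ordinal word when
   [wf_word] holds: the order is a strict total well-founded order and the
   encoding is injective (countability).  Every countable ordinal word
   w : alpha -> S is represented (up to isomorphism) in this way, and
   conversely every well-formed word is isomorphic to one with an ordinal
   domain. *)
Record word (S : Type) := Word {
  pos : Type;
  enc : pos -> nat;
  wlt : pos -> pos -> Prop;
  lab : pos -> S
}.

Definition wf_word S (w : word S) : Prop :=
  injective (@enc S w) /\
  (forall p : pos w, ~ wlt p p) /\
  (forall p q r : pos w, wlt p q -> wlt q r -> wlt p r) /\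
  (forall p q : pos w, p <> q -> wlt p q \/ wlt q p) /\
  well_founded (@wlt S w).

Definition nonempty_word S (w : word S) : Prop := inhabited (pos w).

Inductive form (S : Type) :=
| FLt  : nat -> nat -> form S
| FLab : S -> nat -> form S
| FNot : form S -> form S
| FAnd : form S -> form S -> form S
| FOr  : form S -> form S -> form S
| FEx  : nat -> form S -> form S
| FAll : nat -> form S -> form S.

Fixpoint fv_in S (V : nat -> Prop) (phi : form S) : Prop :=
  match phi with
  | FLt x y => V x /\ V y
  | FLab _ x => V x
  | FNot p => fv_in V p
  | FAnd p q => fv_in V p /\ fv_in V q
  | FOr p q => fv_in V p /\ fv_in V q
  | FEx x p => fv_in (fun z => z = x \/ V z) p
  | FAll x p => fv_in (fun z => z = x \/ V z) p
  end.

Definition sentence S (phi : form S) : Prop := fv_in (fun _ => False) phi.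

Definition upd T (e : nat -> option T) (x : nat) (p : T) : nat -> option T :=
  fun z => if Nat.eqb z x then Some p else e z.

Fixpoint sat S (w : word S) (e : nat -> option (pos w)) (phi : form S) : Prop :=
  match phi with
  | FLt x y => match e x, e y with
               | Some p, Some q => wlt p q
               | _, _ => False end
  | FLab a x => match e x with Some p => lab p = a | None => False end
  | FNot p => ~ sat e p
  | FAnd p q => sat e p /\ sat e q
  | FOr p q => sat e p \/ sat e q
  | FEx x p => exists v : pos w, sat (upd e x v) p
  | FAll x p => forall v : pos w, sat (upd e x v) p
  end.

Definition env0 T : nat -> option T := fun _ => None.

Definition models S (w : word S) (psi : form S) : Prop := sat (@env0 (pos w)) psi.

Definition FO_language S (L : word S -> Prop) : Prop :=
  exists psi : form S, sentence psi /\
    forall w, wf_word w -> (L w <-> models w psi).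

Definition FO_map S (X : Type) (L : word S -> Prop) (h : word S -> X) : Prop :=
  forall x : X, FO_language (fun w => L w /\ h w = x).

(* variables x := 0, y := 1 *)
Definition env2 T (p q : T) : nat -> option T :=
  upd (upd (@env0 T) 0 p) 1 q.

Definition phi_rel S (phi : form S) (w : word S) : pos w -> pos w -> Prop :=
  fun p q => sat (env2 p q) phi.

Definition is_condensation S (w : word S) (E : pos w -> pos w -> Prop) : Prop :=
  (forall p : pos w, E p p) /\
  (forall p q : pos w, E p q -> E q p) /\
  (forall p q r : pos w, E p q -> E q r -> E p r) /\
  (forall p q r : pos w, wlt p q -> wlt q r -> E p r -> E p q).

Definition condensation_formula S (phi : form S) : Prop :=
  fv_in (fun z => z = 0 \/ z = 1) phi /\
  forall w : word S, wf_word w -> is_condensation (@phi_rel S phi w).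

Definition subword S (w : word S) (I : pos w -> Prop) : word S :=
  @Word S {p : pos w | I p}
    (fun p => enc (proj1_sig p))
    (fun p q => wlt (proj1_sig p) (proj1_sig q))
    (fun p => lab (proj1_sig p)).

Definition class_rep S (w : word S) (E : pos w -> pos w -> Prop) (p : pos w) : Prop :=
  forall q : pos w, wlt q p -> ~ E q p.

(* w_u : the word over B with domain dom(phi^(u)) (the ordered set of
   classes, represented by their least elements) whose letter at a class I
   is f applied to the subword u|_I = phi^(u)_I. *)
Definition condense_word A B (phi : form A) (f : word A -> B) (u : word A) : word B :=
  let E := @phi_rel A phi u in
  @Word B {p : pos u | class_rep E p}
    (fun p => enc (proj1_sig p))
    (fun p q => wlt (proj1_sig p) (proj1_sig q))
    (fun p => f (subword (E (proj1_sig p)))).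

(* Main.v *)
Require Import Defs.
From mathcomp Require Import all_boot.
From Stdlib Require Import Arith Lia Classical FunctionalExtensionality ProofIrrelevance
  IndefiniteDescription Wellfounded.Inverse_Image.

Fixpoint rn {A : Type} (r : nat -> nat) (p : form A) : form A :=
  match p with
  | FLt x y => FLt A (r x) (r y)
  | FLab a x => FLab a (r x)
  | FNot p => FNot (rn r p)
  | FAnd p q => FAnd (rn r p) (rn r q)
  | FOr p q => FOr (rn r p) (rn r q)
  | FEx x p => FEx (r x) (rn r p)
  | FAll x p => FAll (r x) (rn r p)
  end.

Lemma sat_rn {A : Type} (w : word A) (r : nat -> nat) (p : form A) :
  (forall a b, r a = r b -> a = b) ->
  forall e : nat -> option (pos w), sat e (rn r p) <-> sat (fun z => e (r z)) p.
Proof.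
  intro Hr; induction p as [x y|a x|p IH|p IHp q IHq|p IHp q IHq|x p IH|x p IH];
    intro e; simpl.
  - tauto.
  - tauto.
  - rewrite IH; tauto.
  - rewrite IHp IHq; tauto.
  - rewrite IHp IHq; tauto.
  - assert (E : forall v, (fun z => upd e (r x) v (r z)) = upd (fun z => e (r z)) x v).
    { intro v; apply functional_extensionality; intro z; unfold upd.
      destruct (Nat.eqb_spec z x) as [->|Hne].
      + now rewrite Nat.eqb_refl.
      + destruct (Nat.eqb_spec (r z) (r x)) as [Hq|]; [now apply Hr in Hq|reflexivity]. }
    split; intros [v Hv]; exists v; [rewrite <- E; apply IH; exact Hv|apply IH; rewrite E; exact Hv].
  - assert (E : forall v, (fun z => upd e (r x) v (r z)) = upd (fun z => e (r z)) x v).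
    { intro v; apply functional_extensionality; intro z; unfold upd.
      destruct (Nat.eqb_spec z x) as [->|Hne].
      + now rewrite Nat.eqb_refl.
      + destruct (Nat.eqb_spec (r z) (r x)) as [Hq|]; [now apply Hr in Hq|reflexivity]. }
    split; intros H v; [rewrite <- E; apply IH; exact (H v)|apply IH; rewrite E; exact (H v)].
Qed.

Lemma sat_fv {A : Type} (w : word A) (p : form A) :
  forall (V : nat -> Prop) (e1 e2 : nat -> option (pos w)), fv_in V p ->
  (forall z, V z -> e1 z = e2 z) -> (sat e1 p <-> sat e2 p).
Proof.
  induction p as [x y|a x|p IH|p IHp q IHq|p IHp q IHq|x p IH|x p IH];
    intros V e1 e2 Hfv He; simpl in *.
  - destruct Hfv as [Hx Hy]; rewrite (He _ Hx) (He _ Hy); tauto.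
  - rewrite (He _ Hfv); tauto.
  - rewrite (IH V e1 e2 Hfv He); tauto.
  - destruct Hfv; rewrite (IHp V e1 e2) // (IHq V e1 e2) //; tauto.
  - destruct Hfv; rewrite (IHp V e1 e2) // (IHq V e1 e2) //; tauto.
  - assert (E : forall v, forall z, z = x \/ V z -> upd e1 x v z = upd e2 x v z).
    { intros v z [->|Hz]; unfold upd; [now rewrite Nat.eqb_refl|].
      destruct (Nat.eqb z x); [reflexivity|now apply He]. }
    split; intros [v Hv]; exists v;
      [apply (IH _ (upd e1 x v) _ Hfv (E v))|apply (IH _ (upd e1 x v) _ Hfv (E v))]; exact Hv.
  - assert (E : forall v, forall z, z = x \/ V z -> upd e1 x v z = upd e2 x v z).
    { intros v z [->|Hz]; unfold upd; [now rewrite Nat.eqb_refl|].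
      destruct (Nat.eqb z x); [reflexivity|now apply He]. }
    split; intros H v;
      [apply (IH _ (upd e1 x v) _ Hfv (E v))|apply (IH _ (upd e1 x v) _ Hfv (E v))]; exact (H v).
Qed.

Lemma fv_mono {A : Type} (p : form A) : forall (V W : nat -> Prop),
  fv_in V p -> (forall z, V z -> W z) -> fv_in W p.
Proof.
  induction p as [x y|a x|p IH|p IHp q IHq|p IHp q IHq|x p IH|x p IH];
    intros V W Hfv HW; simpl in *; try tauto; try (destruct Hfv; split; eauto; fail);
    try (eauto; fail).
  - apply (IH _ _ Hfv); intros z [->|Hz]; auto.
  - apply (IH _ _ Hfv); intros z [->|Hz]; auto.
Qed.

Lemma rn_fv {A : Type} (r : nat -> nat) (p : form A) : forall (V W : nat -> Prop),
  fv_in V p -> (forall z, V z -> W (r z)) -> fv_in W (rn r p).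
Proof.
  induction p as [x y|a x|p IH|p IHp q IHq|p IHp q IHq|x p IH|x p IH];
    intros V W Hfv HW; simpl in *; try tauto; try (destruct Hfv; split; eauto; fail);
    try (eauto; fail).
  - apply (IH _ _ Hfv); intros z [->|Hz]; auto.
  - apply (IH _ _ Hfv); intros z [->|Hz]; auto.
Qed.

Definition rr (a b k : nat) : nat :=
  match k with 0 => a | 1 => b | S (S _) => Nat.add (Nat.add a b) k end.

Lemma rr_inj a b : a <> b -> forall x y, rr a b x = rr a b y -> x = y.
Proof. intros H [|[|x]] [|[|y]]; unfold rr; simpl; lia. Qed.

Definition PhiR {A : Type} (phi : form A) (a b : nat) : form A := rn (rr a b) phi.

Lemma PhiR_sat {A : Type} (phi : form A) (w : word A) a b (e : nat -> option (pos w)) p q :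
  fv_in (fun z => z = 0 \/ z = 1) phi -> a <> b -> e a = Some p -> e b = Some q ->
  (sat e (PhiR phi a b) <-> phi_rel phi p q).
Proof.
  intros Hfv Hab Ha Hb; unfold PhiR, phi_rel.
  rewrite (sat_rn _ _ _ (rr_inj _ _ Hab)).
  apply (sat_fv _ _ _ _ _ Hfv).
  intros z [->| ->]; simpl; [exact Ha|exact Hb].
Qed.

Lemma PhiR_fv {A : Type} (phi : form A) a b (W : nat -> Prop) :
  fv_in (fun z => z = 0 \/ z = 1) phi -> W a -> W b -> fv_in W (PhiR phi a b).
Proof.
  intros Hfv Ha Hb; apply (rn_fv _ _ _ _ Hfv); intros z [->| ->]; simpl; auto.
Qed.

Definition ev (n : nat) : nat := Nat.mul 2 n.
Definition od (n : nat) : nat := S (Nat.mul 2 n).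

Lemma eqb_od x y : Nat.eqb (od y) (od x) = Nat.eqb y x.
Proof.
  destruct (Nat.eqb_spec y x) as [->|H]; [apply Nat.eqb_refl|apply Nat.eqb_neq; unfold od; lia].
Qed.
Lemma eqb_ev x y : Nat.eqb (ev y) (ev x) = Nat.eqb y x.
Proof.
  destruct (Nat.eqb_spec y x) as [->|H]; [apply Nat.eqb_refl|apply Nat.eqb_neq; unfold ev; lia].
Qed.
Lemma eqb_odev x y : Nat.eqb (od y) (ev x) = false.
Proof. apply Nat.eqb_neq; unfold od, ev; lia. Qed.
Lemma eqb_evod x y : Nat.eqb (ev y) (od x) = false.
Proof. apply Nat.eqb_neq; unfold od, ev; lia. Qed.

Lemma od_ne_ev x : forall y, od y <> ev x.
Proof. intros y; unfold od, ev; lia. Qed.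

Fixpoint Rel {A : Type} (phi : form A) (v : nat) (p : form A) : form A :=
  match p with
  | FLt x y => FLt A (od x) (od y)
  | FLab a x => FLab a (od x)
  | FNot p => FNot (Rel phi v p)
  | FAnd p q => FAnd (Rel phi v p) (Rel phi v q)
  | FOr p q => FOr (Rel phi v p) (Rel phi v q)
  | FEx x p => FEx (od x) (FAnd (PhiR phi v (od x)) (Rel phi v p))
  | FAll x p => FAll (od x) (FOr (FNot (PhiR phi v (od x))) (Rel phi v p))
  end.

Lemma Rel_sat {A : Type} (phi : form A) (u : word A) (p0 : pos u) (v : nat) (psi : form A) :
  fv_in (fun z => z = 0 \/ z = 1) phi -> (forall y, od y <> v) ->
  forall (e : nat -> option (pos u))
         (es : nat -> option (pos (subword (phi_rel phi p0)))),
  e v = Some p0 ->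
  (forall y, e (od y) = option_map (fun q : pos (subword (phi_rel phi p0)) => proj1_sig q) (es y)) ->
  (sat e (Rel phi v psi) <-> sat es psi).
Proof.
  intros Hphi Hodd.
  induction psi as [x y|a x|p IH|p IHp q IHq|p IHp q IHq|x p IH|x p IH];
    intros e es Hv Hes; simpl.
  - rewrite !Hes; destruct (es x), (es y); simpl; tauto.
  - rewrite Hes; destruct (es x); simpl; tauto.
  - rewrite (IH e es) //; tauto.
  - rewrite (IHp e es) // (IHq e es) //; tauto.
  - rewrite (IHp e es) // (IHq e es) //; tauto.
  - assert (Hv' : forall w, upd e (od x) w v = Some p0).
    { intro w; unfold upd; destruct (Nat.eqb_spec v (od x)) as [H|]; [now destruct (Hodd x)|exact Hv]. }
    assert (Hvx : v <> od x) by (intro H; exact (Hodd x (esym H))).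
    assert (Hw : forall w, upd e (od x) w (od x) = Some w).
    { intro w; unfold upd; now rewrite Nat.eqb_refl. }
    assert (Hes' : forall (w : pos (subword (phi_rel phi p0))) y,
      upd e (od x) (proj1_sig w) (od y) =
      option_map (fun q : pos (subword (phi_rel phi p0)) => proj1_sig q) (upd es x w y)).
    { intros w y; unfold upd; rewrite eqb_od; destruct (Nat.eqb y x); [reflexivity|apply Hes]. }
    split.
    + intros [w [H1 H2]].
      assert (Hr : phi_rel phi p0 w) by (apply (PhiR_sat _ _ _ _ _ _ _ Hphi Hvx (Hv' w) (Hw w)) in H1; exact H1).
      exists (exist _ w Hr : pos (subword (phi_rel phi p0))).
      apply (IH (upd e (od x) w)); auto.
      intro y; exact (Hes' (exist _ w Hr) y).
    + intros [w H]; exists (proj1_sig w); split.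
      * apply (PhiR_sat _ _ _ _ _ _ _ Hphi Hvx (Hv' _) (Hw _)).
        exact (proj2_sig w).
      * apply (IH (upd e (od x) (proj1_sig w)) (upd es x w)); auto.
  - assert (Hv' : forall w, upd e (od x) w v = Some p0).
    { intro w; unfold upd; destruct (Nat.eqb_spec v (od x)) as [H|]; [now destruct (Hodd x)|exact Hv]. }
    assert (Hvx : v <> od x) by (intro H; exact (Hodd x (esym H))).
    assert (Hw : forall w, upd e (od x) w (od x) = Some w).
    { intro w; unfold upd; now rewrite Nat.eqb_refl. }
    assert (Hes' : forall (w : pos (subword (phi_rel phi p0))) y,
      upd e (od x) (proj1_sig w) (od y) =
      option_map (fun q : pos (subword (phi_rel phi p0)) => proj1_sig q) (upd es x w y)).
    { intros w y; unfold upd; rewrite eqb_od; destruct (Nat.eqb y x); [reflexivity|apply Hes]. }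
    split.
    + intros H w.
      destruct (H (proj1_sig w)) as [H1|H2].
      * exfalso; apply H1.
        apply (PhiR_sat _ _ _ _ _ _ _ Hphi Hvx (Hv' _) (Hw _)).
        exact (proj2_sig w).
      * apply (IH (upd e (od x) (proj1_sig w)) (upd es x w)); auto.
    + intros H w.
      destruct (classic (phi_rel phi p0 w)) as [Hr|Hr].
      * right. apply (IH (upd e (od x) w) (upd es x (exist _ w Hr : pos (subword (phi_rel phi p0))))); auto.
        intro y; exact (Hes' (exist _ w Hr) y).
      * left; intro H1; apply Hr.
        apply (PhiR_sat _ _ _ _ _ _ _ Hphi Hvx (Hv' w) (Hw w)) in H1; exact H1.
Qed.

Lemma Rel_fv {A : Type} (phi : form A) (v : nat) (psi : form A) :
  fv_in (fun z => z = 0 \/ z = 1) phi ->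
  forall (V W : nat -> Prop), fv_in V psi -> W v -> (forall n, V n -> W (od n)) ->
  fv_in W (Rel phi v psi).
Proof.
  intro Hphi.
  induction psi as [x y|a x|p IH|p IHp q IHq|p IHp q IHq|x p IH|x p IH];
    intros V W Hfv Hv HW; simpl in *; try tauto; try (destruct Hfv; split; eauto; fail);
    try (eauto; fail).
  - split; [apply PhiR_fv; auto|].
    apply (IH _ _ Hfv); auto. intros n [->|Hn]; auto.
  - split; [apply PhiR_fv; auto|].
    apply (IH _ _ Hfv); auto. intros n [->|Hn]; auto.
Qed.

Definition Rep {A : Type} (phi : form A) (v : nat) : form A :=
  FAll 1 (FNot (FAnd (FLt A 1 v) (PhiR phi 1 v))).

Lemma Rep_sat {A : Type} (phi : form A) (u : word A) (v : nat) (e : nat -> option (pos u)) p0 :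
  fv_in (fun z => z = 0 \/ z = 1) phi -> v <> 1 -> e v = Some p0 ->
  (sat e (Rep phi v) <-> class_rep (phi_rel phi (w:=u)) p0).
Proof.
  intros Hphi H1 Hv; unfold Rep, class_rep; simpl.
  assert (Hv' : forall w, upd e 1 w v = Some p0).
  { intro w; unfold upd; destruct (Nat.eqb_spec v 1); [contradiction|exact Hv]. }
  assert (Hw : forall w, upd e 1 w 1 = Some w) by (intro w; reflexivity).
  split.
  - intros H q Hq Hr; apply (H q); rewrite (Hv' q); split; [exact Hq|].
    apply (PhiR_sat _ _ _ _ _ _ _ Hphi (fun H => H1 (esym H)) (Hw q) (Hv' q)); exact Hr.
  - intros H q [Hq Hr]; rewrite (Hv' q) in Hq; apply (H q Hq).
    apply (PhiR_sat _ _ _ _ _ _ _ Hphi (fun H => H1 (esym H)) (Hw q) (Hv' q)) in Hr; exact Hr.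
Qed.

Lemma Rep_fv {A : Type} (phi : form A) (v : nat) (W : nat -> Prop) :
  fv_in (fun z => z = 0 \/ z = 1) phi -> W v -> fv_in W (Rep phi v).
Proof.
  intros Hphi Hv; unfold Rep; simpl; split; [auto|]. apply PhiR_fv; auto.
Qed.

Fixpoint Tr {A B : Type} (phi : form A) (psi : B -> form A) (c : form B) : form A :=
  match c with
  | FLt x y => FLt A (ev x) (ev y)
  | FLab b x => Rel phi (ev x) (psi b)
  | FNot p => FNot (Tr phi psi p)
  | FAnd p q => FAnd (Tr phi psi p) (Tr phi psi q)
  | FOr p q => FOr (Tr phi psi p) (Tr phi psi q)
  | FEx x p => FEx (ev x) (FAnd (Rep phi (ev x)) (Tr phi psi p))
  | FAll x p => FAll (ev x) (FOr (FNot (Rep phi (ev x))) (Tr phi psi p))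
  end.

Lemma Tr_fv {A B : Type} (phi : form A) (psi : B -> form A) (c : form B) :
  fv_in (fun z => z = 0 \/ z = 1) phi -> (forall b, sentence (psi b)) ->
  forall (V W : nat -> Prop), fv_in V c -> (forall n, V n -> W (ev n)) ->
  fv_in W (Tr phi psi c).
Proof.
  intros Hphi Hpsi.
  induction c as [x y|a x|p IH|p IHp q IHq|p IHp q IHq|x p IH|x p IH];
    intros V W Hfv HW; simpl in *; try tauto; try (destruct Hfv; split; eauto; fail);
    try (eauto; fail).
  - apply (Rel_fv _ _ _ Hphi _ _ (Hpsi a)); auto. intros n [].
  - split; [split; [split; auto|apply PhiR_fv; auto]|].
    apply (IH _ _ Hfv). intros n [->|Hn]; auto.
  - split; [split; [split; auto|apply PhiR_fv; auto]|].
    apply (IH _ _ Hfv). intros n [->|Hn]; auto.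
Qed.

Lemma Tr_sat {A B : Type} (phi : form A) (psi : B -> form A) (f : word A -> B)
  (u : word A) (c : form B) :
  fv_in (fun z => z = 0 \/ z = 1) phi ->
  (forall (p0 : pos u) b, f (subword (phi_rel phi p0)) = b <->
      models (subword (phi_rel phi p0)) (psi b)) ->
  forall (V : nat -> Prop) (ec : nat -> option (pos (condense_word phi f u)))
         (e : nat -> option (pos u)),
  fv_in V c -> (forall n, V n -> ec n <> None) ->
  (forall n, e (ev n) = option_map (fun q : pos (condense_word phi f u) => proj1_sig q) (ec n)) ->
  (forall n, e (od n) = None) ->
  (sat e (Tr phi psi c) <-> sat ec c).
Proof.
  intros Hphi Hpsi.
  induction c as [x y|a x|p IH|p IHp q IHq|p IHp q IHq|x p IH|x p IH];
    intros V ec e Hfv HV Hev Hod; simpl in *.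
  - rewrite !Hev; destruct (ec x), (ec y); simpl; tauto.
  - destruct (ec x) as [p|] eqn:Hx; [|exfalso; exact (HV x Hfv Hx)].
    assert (Hex : e (ev x) = Some (proj1_sig p)) by (rewrite Hev Hx; reflexivity).
    rewrite (Rel_sat phi u (proj1_sig p) (ev x) (psi a) Hphi
              (od_ne_ev x)
              e (@env0 _) Hex (fun y => Hod y)).
    symmetry; apply Hpsi.
  - rewrite (IH V ec e) //; tauto.
  - destruct Hfv as [H1 H2]. rewrite (IHp V ec e) // (IHq V ec e) //; tauto.
  - destruct Hfv as [H1 H2]. rewrite (IHp V ec e) // (IHq V ec e) //; tauto.
  - assert (Hx1 : ev x <> 1) by (unfold ev; lia).
    assert (Hw : forall w, upd e (ev x) w (ev x) = Some w).
    { intro w; unfold upd; now rewrite Nat.eqb_refl. }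
    assert (HV' : forall w, forall n, n = x \/ V n -> upd ec x w n <> None).
    { intros w n Hn; unfold upd; destruct (Nat.eqb_spec n x); [discriminate|].
      destruct Hn as [|Hn]; [contradiction|exact (HV n Hn)]. }
    assert (Hev' : forall w n, upd e (ev x) (proj1_sig w) (ev n) =
      option_map (fun q : pos (condense_word phi f u) => proj1_sig q) (upd ec x w n)).
    { intros w n; unfold upd; rewrite eqb_ev; destruct (Nat.eqb n x); [reflexivity|apply Hev]. }
    assert (Hod' : forall w n, upd e (ev x) w (od n) = None).
    { intros w n; unfold upd; rewrite eqb_odev; apply Hod. }
    split.
    + intros [w [H1 H2]].
      pose proof (proj1 (Rep_sat phi u (ev x) _ w Hphi Hx1 (Hw w)) H1) as Hr.
      exists (exist _ w Hr : pos (condense_word phi f u)).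
      apply (IH _ _ (upd e (ev x) w) Hfv (HV' (exist _ w Hr : pos (condense_word phi f u)))); auto.
      intro n; exact (Hev' (exist _ w Hr) n).
    + intros [w H]; exists (proj1_sig w); split.
      * apply (Rep_sat phi u (ev x) _ _ Hphi Hx1 (Hw _)). exact (proj2_sig w).
      * apply (IH _ _ (upd e (ev x) (proj1_sig w)) Hfv (HV' w)); auto.
  - assert (Hx1 : ev x <> 1) by (unfold ev; lia).
    assert (Hw : forall w, upd e (ev x) w (ev x) = Some w).
    { intro w; unfold upd; now rewrite Nat.eqb_refl. }
    assert (HV' : forall w, forall n, n = x \/ V n -> upd ec x w n <> None).
    { intros w n Hn; unfold upd; destruct (Nat.eqb_spec n x); [discriminate|].
      destruct Hn as [|Hn]; [contradiction|exact (HV n Hn)]. }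
    assert (Hev' : forall w n, upd e (ev x) (proj1_sig w) (ev n) =
      option_map (fun q : pos (condense_word phi f u) => proj1_sig q) (upd ec x w n)).
    { intros w n; unfold upd; rewrite eqb_ev; destruct (Nat.eqb n x); [reflexivity|apply Hev]. }
    assert (Hod' : forall w n, upd e (ev x) w (od n) = None).
    { intros w n; unfold upd; rewrite eqb_odev; apply Hod. }
    split.
    + intros H w.
      destruct (H (proj1_sig w)) as [H1|H2].
      * exfalso; apply H1. apply (Rep_sat phi u (ev x) _ _ Hphi Hx1 (Hw _)). exact (proj2_sig w).
      * apply (IH _ _ (upd e (ev x) (proj1_sig w)) Hfv (HV' w)); auto.
    + intros H w.
      destruct (classic (class_rep (phi_rel phi (w:=u)) w)) as [Hr|Hr].
      * right. apply (IH _ (upd ec x (exist _ w Hr : pos (condense_word phi f u))) (upd e (ev x) w) Hfv (HV' (exist _ w Hr : pos (condense_word phi f u)))); auto.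
        intro n; exact (Hev' (exist _ w Hr) n).
      * left; intro H1; apply Hr.
        exact (proj1 (Rep_sat phi u (ev x) _ w Hphi Hx1 (Hw w)) H1).
Qed.

Lemma wf_sig {S T : Type} (w : word S) (P : pos w -> Prop) (l : {p | P p} -> T) :
  wf_word w ->
  wf_word (@Word T {p | P p} (fun p => enc (proj1_sig p))
             (fun p q => wlt (proj1_sig p) (proj1_sig q)) l).
Proof.
  intros [Hi [Hirr [Htr [Htot Hwf]]]].
  split; [|split; [|split; [|split]]]; simpl.
  - intros [p hp] [q hq] E; simpl in E.
    pose proof (Hi _ _ E) as Hpq; subst q.
    f_equal; apply proof_irrelevance.
  - intros [p hp]; apply Hirr.
  - intros [p hp] [q hq] [r hr]; apply Htr.
  - intros [p hp] [q hq] Hne; apply Htot; simpl; intro Hpq; subst q; apply Hne;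
      f_equal; apply proof_irrelevance.
  - exact (wf_inverse_image _ _ (@wlt S w) (fun p : {p | P p} => proj1_sig p) Hwf).
Qed.

Lemma wf_subword {S : Type} (w : word S) (I : pos w -> Prop) :
  wf_word w -> wf_word (subword I).
Proof. intro H; exact (wf_sig w I (fun p => lab (proj1_sig p)) H). Qed.

Lemma wf_condense {A B : Type} (phi : form A) (f : word A -> B) (u : word A) :
  wf_word u -> wf_word (condense_word phi f u).
Proof.
  intro H; exact (wf_sig u _ (fun p => f (subword (phi_rel phi (proj1_sig p)))) H).
Qed.

Theorem lemma2p1 (A B C : finType) (phi : form A)
  (f : word A -> B) (g : word B -> C) :
  condensation_formula phi ->
  FO_map (@nonempty_word A) f ->
  FO_map (fun _ : word B => True) g ->
  FO_map (fun _ : word A => True) (fun u => g (condense_word phi f u)).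
Proof.
  intros [Hphifv Hphicond] Hf Hg c.
  assert (X : forall b : B, {p : form A | sentence p /\ forall w, wf_word w ->
             (nonempty_word w /\ f w = b <-> models w p)}).
  { intro b; apply constructive_indefinite_description; exact (Hf b). }
  pose (psi := fun b => proj1_sig (X b)).
  destruct (Hg c) as [chi [Hchi Hgc]].
  exists (Tr phi psi chi). split.
  - apply (Tr_fv phi psi chi Hphifv (fun b => proj1 (proj2_sig (X b))) _ _ Hchi).
    intros n [].
  - intros u Hu.
    rewrite (Hgc _ (wf_condense phi f u Hu)).
    unfold models.
    symmetry.
    apply (Tr_sat phi psi f u chi Hphifv) with (V := fun _ => False);
      [|exact Hchi|intros n []|intro n; reflexivity|intro n; reflexivity].
    intros p0 b.
    unfold psi.
    rewrite <- (proj2 (proj2_sig (X b)) _ (wf_subword u _ Hu)).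
    split; [intro H; split; [|exact H]|intros [_ H]; exact H].
    constructor.
    exists p0.
    destruct (Hphicond u Hu) as [Hrefl _]; exact (Hrefl p0).
Qed.
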